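(* Let $p$ be a prime and $A\subseteq\mathbb{F}_p$ satisfy $A-A\doteq\mathcal{R}_p$. Put $n:=|A|$ and fix any quadratic non-residue $\nu\in\mathcal{N}_p$. Then the $n^2$ sums $a'+\nu a''$ with $a',a''\in A$ are pairwise distinct, and the set $D:=\{a'+\nu a''\colon a',a''\in A\}$ is a $(p,n^2,n(n+1)/2)$-difference set in the additive group of $\mathbb{F}_p$.
   Context: $\mathcal{R}_p$ and $\mathcal{N}_p$ are the sets of quadratic residues and quadratic non-residues in $\mathbb{F}_p^\times$. $A-A\doteq S$ means: every element of $S$ has exactly one representation as $a'-a''$ with $a',a''\in A$, and every difference $a'-a''$ with $a'\ne a''$ in $A$ lies in $S$. For positive integers $v,k,\lambda$, a $(v,k,\lambda)$-difference set in an abelian group of order $v$ is a $k$-element subset $D$ such that every nonzero group element has exactly $\lambda$ representations as $d'-d''$ with $d',d''\in D$. *)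

(* Defs.v *)
From HB Require Import structures.
From mathcomp Require Import all_boot all_order all_algebra.
Set Implicit Arguments. Unset Strict Implicit. Unset Printing Implicit Defensive.
Import GRing.Theory.
Local Open Scope ring_scope.

Definition qres (p : nat) : {set 'F_p} :=
  [set x : 'F_p | (x != 0) && [exists y : 'F_p, y ^+ 2 == x]].
Definition qnonres (p : nat) : {set 'F_p} :=
  [set x : 'F_p | (x != 0) && ~~ [exists y : 'F_p, y ^+ 2 == x]].

Definition nreps (G : finZmodType) (D : {set G}) (g : G) : nat :=
  #|[set u in setX D D | u.1 - u.2 == g]|.

Definition diff_exact (G : finZmodType) (A S : {set G}) : Prop :=
  (forall s, s \in S -> nreps A s = 1%N) /\
  (forall a1 a2, a1 \in A -> a2 \in A -> a1 != a2 -> a1 - a2 \in S).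

Definition is_difference_set (G : finZmodType) (v k lam : nat) (D : {set G}) : Prop :=
  [/\ (0 < v)%N /\ (0 < k)%N /\ (0 < lam)%N, #|G| = v, #|D| = k &
      forall g : G, g != 0 -> nreps D g = lam].

(* Main.v *)
Require Import Defs.
From HB Require Import structures.
From mathcomp Require Import all_boot all_order all_algebra all_field ring zify.
Import GRing.Theory.
Local Open Scope ring_scope.


Lemma card_sep (T : finType) (X : {set T}) (P : pred T) :
  #|[set u in X | P u]| = (\sum_(u in X) (P u : nat))%N.
Proof.
rewrite -sum1_card (eq_bigl (fun u => (u \in X) && P u)); last by move=> u; rewrite inE.
rewrite big_mkcondr /=; apply: eq_bigr => u _; by case: (P u).
Qed.

Lemma sum_pair (T : finType) (X : {set T}) (F : T -> T -> nat) :
  (\sum_(u in setX X X) F u.1 u.2 = \sum_(x in X) \sum_(y in X) F x y)%N.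
Proof.
rewrite pair_big_dep /=; apply: eq_bigl => -[x y]; by rewrite inE.
Qed.

Lemma nreps_sum (G : finZmodType) (D : {set G}) (h : G -> nat) :
  (\sum_(u in setX D D) h (u.1 - u.2)%R = \sum_g nreps D g * h g)%N.
Proof.
rewrite /nreps.
under [RHS]eq_bigr => g _ do rewrite card_sep big_distrl /=.
rewrite exchange_big /=; apply: eq_bigr => u _.
rewrite (bigD1 (u.1 - u.2)) //= eqxx mul1n big1 ?addn0 // => g /negbTE ng.
by rewrite eq_sym ng.
Qed.

Lemma nreps_total (G : finZmodType) (D : {set G}) :
  (\sum_g nreps D g = #|D| ^ 2)%N.
Proof.
have := nreps_sum _ D (fun _ => 1%N).
rewrite sum1_card cardsX => E.
rewrite (eq_bigr (fun g => nreps D g * 1)%N); last by move=> g _; rewrite muln1.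
by rewrite -E expnS expn1.
Qed.

Lemma nreps0 (G : finZmodType) (D : {set G}) : nreps D 0 = #|D|.
Proof.
rewrite /nreps card_sep (sum_pair _ D (fun x y => ((x - y == 0)%R : nat))) -sum1_card.
apply: eq_bigr => x xD; rewrite (bigD1 x) //= subrr eqxx big1 // => y /andP[_ yx].
by rewrite subr_eq0 eq_sym (negbTE yx).
Qed.

Lemma arith (n r c : nat) : (0 < r)%N -> (r + n = n ^ 2)%N -> (n ^ 2 + 2 * r * c = (n ^ 2) ^ 2)%N ->
  c = (n * (n + 1) %/ 2)%N /\ (0 < n * (n + 1) %/ 2)%N /\ (0 < n ^ 2)%N.
Proof.
case: n => [|m]; first by rewrite addn0 => r0 e; move: r0; rewrite e.
move=> r0 e1 e2.
have rn : r = (m * m.+1)%N.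
  apply/eqP; rewrite -(eqn_add2r m.+1) e1; apply/eqP; ring.
subst r.
have e3 : (m * m.+1 * (c * 2) = m * m.+1 * (m.+1 * (m.+1 + 1)))%N.
  apply/eqP; rewrite -(eqn_add2l (m.+1 ^ 2)).
  have -> : (m.+1 ^ 2 + m * m.+1 * (c * 2) = m.+1 ^ 2 + 2 * (m * m.+1) * c)%N by ring.
  rewrite e2; apply/eqP; ring.
have e4 : (c * 2 = m.+1 * (m.+1 + 1))%N by apply/eqP; rewrite -(eqn_pmul2l r0); apply/eqP.
rewrite -e4 mulnK //; split => //; split.
  by move: e4; case: c {e2 e3} => [|c] //; rewrite mul0n addn1 mulnS.
by rewrite expn_gt0.
Qed.

Section Main.
Variables (p : nat) (A : {set 'F_p}) (nu : 'F_p).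
Hypotheses (hp : prime p) (hA : diff_exact A (qres p)) (hnu : nu \in qnonres p).

Lemma qresP x : reflect (x != 0 /\ exists y, y ^+ 2 = x) (x \in qres p).
Proof.
rewrite inE; apply: (iffP andP) => -[nz H]; split => //.
  by case/existsP: H => y /eqP; exists y.
by case: H => y e; apply/existsP; exists y; apply/eqP.
Qed.

Lemma Rmul s x : s \in qres p -> (s * x \in qres p) = (x \in qres p).
Proof.
case/qresP => sn [t ts].
have tn : t != 0 by apply: contraNneq sn => e; rewrite -ts e expr2 mul0r.
apply/qresP/qresP => [[sxn [y e]] | [xn [y e]]].
  split; first by apply: contraNneq sxn => ->; rewrite mulr0.
  by exists (y / t); rewrite expr_div_n e -ts; field.
split; first by rewrite mulf_neq0.
by exists (t * y); rewrite exprMn ts e.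
Qed.

Lemma nun0 : nu != 0.
Proof. by move: hnu; rewrite inE => /andP[]. Qed.

Lemma nuR : nu \notin qres p.
Proof. by move: hnu; rewrite !inE => /andP[-> ->]. Qed.

Lemma p_neq2 : p != 2%N.
Proof.
apply/eqP => p2.
have h1 := expf_card nu; rewrite (card_Fp hp) in h1.
have e : nu ^+ 2 = nu := etrans (f_equal (fun k => nu ^+ k) (esym p2)) h1.
move: nuR; rewrite inE nun0 /=; case/existsP; exists nu; by rewrite e.
Qed.

Lemma two_n0 : (2%:R : 'F_p) != 0.
Proof.
rewrite -(dvdn_pcharf (pchar_Fp hp)); apply/negP => /(dvdn_leq) H.
move: (H isT) (prime_gt1 hp) p_neq2; rewrite leq_eqVlt => /orP[/eqP->//|].
by rewrite ltnS => H1 H2; have := leq_trans H2 H1.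
Qed.

Lemma neg_ne (t : 'F_p) : t != 0 -> t != - t.
Proof.
move=> tn; apply: contraNneq tn => e.
have : 2%:R * t = 0 by rewrite mulr_natl mulr2n {2}e subrr.
by move/eqP; rewrite mulf_eq0 (negbTE two_n0).
Qed.

Lemma cardR : p.-1 = (2 * #|qres p|)%N.
Proof.
have h : #|[set~ (0:'F_p)]| = p.-1 by rewrite cardsC1 card_Fp.
rewrite -h -sum1_card.
rewrite (partition_big (fun x => x ^+ 2) (fun r => r \in qres p)) /=; last first.
  move=> x; rewrite in_setC1 => xn; apply/qresP; split; first exact: expf_neq0.
  by exists x.
rewrite mulnC -sum_nat_const; apply: eq_bigr => r /qresP [rn [t e]].
have tn : t != 0 by apply: contraNneq rn => e'; rewrite -e e' expr2 mul0r.
transitivity #|[set t; - t]|; last by rewrite cards2 neg_ne.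
rewrite -sum1_card; apply: eq_bigl => x.
rewrite !inE -e eqf_sqr.
case: (x =P t) => [->|] /=; first by rewrite tn.
case: (x =P -t) => [->|] //=; first by rewrite oppr_eq0 tn.
by rewrite andbF.
Qed.

Lemma mE x : nreps A x = if x == 0 then #|A| else (x \in qres p : nat).
Proof.
case: (x =P 0) => [->|/eqP xn]; first exact: nreps0.
case xR: (x \in qres p); first exact: hA.1.
apply/eqP; rewrite /nreps cards_eq0; apply/eqP/setP => -[a b]; rewrite !inE /=.
apply/negbTE; apply/negP => /andP[/andP[ha hb] /eqP e].
have ab : a != b by apply: contraNneq xn => e'; rewrite -e e' subrr.
by move: (hA.2 a b ha hb ab); rewrite e xR.
Qed.

Lemma m_mul s x : s \in qres p -> nreps A (s * x) = nreps A x.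
Proof.
move=> sR; have [sn _] := qresP _ sR.
by rewrite !mE Rmul // mulf_eq0 (negbTE sn).
Qed.

Lemma cardRn : (#|qres p| + #|A| = #|A| ^ 2)%N.
Proof.
rewrite -(nreps_total _ A) (bigD1 0) //= nreps0 addnC; congr (_ + _)%N.
rewrite -sum1_card big_mkcond [in RHS]big_mkcond /=; apply: eq_bigr => g _.
rewrite mE; case: (g =P 0) => [->|/eqP gn] /=; last by case: (g \in qres p).
by rewrite inE eqxx.
Qed.

Lemma injA a1 a2 b1 b2 : a1 \in A -> a2 \in A -> b1 \in A -> b2 \in A ->
  a1 + nu * a2 = b1 + nu * b2 -> a1 = b1 /\ a2 = b2.
Proof.
move=> ha1 ha2 hb1 hb2 e.
case: (eqVneq a2 b2) => [ee|ne].
  by subst; split => //; exact: addIr e.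
have dR := hA.2 b2 a2 hb2 ha2 (contra_neq (@esym _ _ _) ne).
have e1 : a1 - b1 = nu * (b2 - a2).
  apply/eqP; rewrite -subr_eq0.
  have -> : a1 - b1 - nu * (b2 - a2) = (a1 + nu * a2) - (b1 + nu * b2) by ring.
  by rewrite e subrr.
have [dn _] := qresP _ dR.
have ab : a1 != b1.
  apply: contraTneq isT => ee; move: e1; rewrite ee subrr => /esym/eqP.
  by rewrite mulf_eq0 (negbTE nun0) (negbTE dn).
have := hA.2 a1 b1 ha1 hb1 ab; rewrite e1 mulrC Rmul //.
by move: nuR => /negbTE ->.
Qed.

Definition D := [set a1 + nu * a2 | a1 in A, a2 in A].

Lemma cardD : #|D| = (#|A| ^ 2)%N.
Proof.
rewrite /D curry_imset2X card_in_imset ?cardsX ?expnS ?expn0 ?muln1 //.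
move=> [a1 a2] [b1 b2]; rewrite !inE /= => /andP[h1 h2] /andP[h3 h4] e.
by have [-> ->] := @injA _ _ _ _ h1 h2 h3 h4 e.
Qed.

Lemma Nsurj g : g != 0 -> g \notin qres p -> exists2 r, r \in qres p & g = nu * r.
Proof.
move=> gn gR.
pose N := [set~ (0:'F_p)] :\: qres p.
have sub : (fun r => nu * r) @: qres p \subset N.
  apply/subsetP => y /imsetP [r rR ->]; have [rn _] := qresP _ rR.
  by rewrite in_setD in_setC1 mulf_eq0 negb_or nun0 rn mulrC Rmul // (negbTE nuR).
have cN : #|N| = #|qres p|.
  have := cardsID (qres p) [set~ (0:'F_p)].
  rewrite cardsC1 card_Fp // cardR.
  have -> : [set~ (0:'F_p)] :&: qres p = qres p.
    apply/setIidPr/subsetP => x /qresP [xn _]; by rewrite in_setC1.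
  rewrite -/N => h; apply/eqP; by rewrite -(eqn_add2l #|qres p|) h mul2n -addnn.
have cI : #|(fun r => nu * r) @: qres p| = #|qres p| by apply: card_imset; exact: mulfI nun0.
have := (subset_leqif_cards sub).2; rewrite cI cN eqxx => /esym/eqP E.
have : g \in N by rewrite in_setD in_setC1 gn gR.
by rewrite -E => /imsetP [r rR ->]; exists r.
Qed.

Definition S g := (\sum_x \sum_y nreps A x * nreps A y * (((x + nu * y == g)%R) : nat))%N.

Lemma TS g : nreps D g = S g.
Proof.
pose phi := fun q : ('F_p * 'F_p) * ('F_p * 'F_p) => (q.1.1 + nu * q.2.1, q.1.2 + nu * q.2.2).
pose Q := [set q in setX (setX A A) (setX A A) | (q.1.1 - q.1.2) + nu * (q.2.1 - q.2.2) == g].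
have E : [set u in setX D D | u.1 - u.2 == g] = phi @: Q.
  apply/setP => -[d1 d2]; rewrite inE /=; apply/andP/imsetP.
    case; rewrite in_setX => /andP[/imset2P[a1 a2 ha1 ha2 ->] /imset2P[b1 b2 hb1 hb2 ->]] /eqP e.
    exists ((a1, b1), (a2, b2)) => //.
    rewrite inE !in_setX /= ha1 ha2 hb1 hb2 /=; apply/eqP; rewrite -e; ring.
  case=> -[[a1 b1] [a2 b2]]; rewrite inE !in_setX /= => /andP[/andP[/andP[ha1 hb1] /andP[ha2 hb2]] /eqP e] [-> ->].
  split; first by apply/andP; split; apply/imset2P; [exists a1 a2 | exists b1 b2].
  by apply/eqP; rewrite -e; ring.
rewrite /nreps E card_in_imset; last first.
  move=> [[a1 b1] [a2 b2]] [[c1 d1] [c2 d2]] /setIdP[hq _] /setIdP[hq' _].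
  rewrite !in_setX /= in hq hq'.
  case/andP: hq => /andP[ha1 hb1] /andP[ha2 hb2].
  case/andP: hq' => /andP[hc1 hd1] /andP[hc2 hd2].
  move=> E'.
  have e1 : a1 + nu * a2 = c1 + nu * c2 := congr1 fst E'.
  have e2 : b1 + nu * b2 = d1 + nu * d2 := congr1 snd E'.
  have [-> ->] := @injA _ _ _ _ ha1 ha2 hc1 hc2 e1.
  by have [-> ->] := @injA _ _ _ _ hb1 hb2 hd1 hd2 e2.
rewrite card_sep (sum_pair _ (setX A A) (fun u w => (((u.1 - u.2) + nu * (w.1 - w.2) == g)%R : nat))).
transitivity (\sum_(u in setX A A) (fun x => \sum_y nreps A y * (((x + nu * y == g)%R) : nat)) (u.1 - u.2)%R)%N.
  apply: eq_bigr => u _.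
  exact: (nreps_sum _ A (fun y => (((u.1 - u.2) + nu * y == g)%R : nat))).
rewrite (nreps_sum _ A (fun x => \sum_y nreps A y * (((x + nu * y == g)%R) : nat))%N) /S; apply: eq_bigr => x _; rewrite big_distrr; apply: eq_bigr => y _.
by rewrite -[RHS]mulnA.
Qed.

Lemma S_mul s g : s \in qres p -> S (s * g) = S g.
Proof.
move=> sR; have [sn _] := qresP _ sR.
rewrite /S (reindex_inj (mulfI sn)) /=; apply: eq_bigr => x _.
rewrite (reindex_inj (mulfI sn)) /=; apply: eq_bigr => y _.
rewrite !m_mul //; congr (_ * nat_of_bool _)%N.
have -> : s * x + nu * (s * y) = s * (x + nu * y) by ring.
by rewrite (inj_eq (mulfI sn)).
Qed.

Lemma S_nu g : S (nu * g) = S g.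
Proof.
have n2R : nu ^+ 2 \in qres p by apply/qresP; split; [exact: expf_neq0 nun0 | exists nu].
have [n2 _] := qresP _ n2R.
rewrite /S exchange_big /=; apply: eq_bigr => y _.
rewrite (reindex_inj (mulfI n2)) /=; apply: eq_bigr => x _.
rewrite m_mul // [(nreps A x * _)%N]mulnC; congr (_ * nat_of_bool _)%N.
have -> : nu ^+ 2 * x + nu * y = nu * (y + nu * x) by ring.
by rewrite (inj_eq (mulfI nun0)).
Qed.

Lemma S_const g : g != 0 -> S g = S 1.
Proof.
move=> gn; case gR: (g \in qres p).
  by rewrite -(S_mul g 1 gR) mulr1.
have [r rR ->] := Nsurj _ gn (negbT gR).
by rewrite S_nu -(S_mul r 1 rR) mulr1.
Qed.

Lemma main_in :
  (forall a1 a2 b1 b2 : 'F_p, a1 \in A -> a2 \in A -> b1 \in A -> b2 \in A ->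
     a1 + nu * a2 = b1 + nu * b2 -> a1 = b1 /\ a2 = b2) /\
  is_difference_set p (#|A| ^ 2)%N (#|A| * (#|A| + 1) %/ 2)%N D.
Proof.
split; first exact: injA.
have h1 : (1 : 'F_p) \in qres p by apply/qresP; split; [exact: oner_neq0 | exists 1; exact: expr1n].
have Rpos : (0 < #|qres p|)%N by apply/card_gt0P; exists 1.
have key : forall g, g != 0 -> nreps D g = S 1 by move=> g gn; rewrite TS S_const.
have tot := nreps_total _ D.
rewrite (bigD1 0) //= nreps0 cardD in tot.
rewrite (eq_bigr (fun _ => S 1)) in tot; last by move=> g gn; apply: key.
rewrite sum_nat_const cardC1 card_Fp // cardR in tot.
have [cE [cpos npos]] := arith _ _ _ Rpos cardRn tot.
split => //.
- by split => //; exact: prime_gt0.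
- exact: card_Fp.
- exact: cardD.
- by move=> g gn; rewrite key // cE.
Qed.

End Main.

Theorem claim1 (p : nat) (A : {set 'F_p}) (nu : 'F_p) :
  prime p -> diff_exact A (qres p) -> nu \in qnonres p ->
  (forall a1 a2 b1 b2 : 'F_p, a1 \in A -> a2 \in A -> b1 \in A -> b2 \in A ->
     a1 + nu * a2 = b1 + nu * b2 -> a1 = b1 /\ a2 = b2) /\
  is_difference_set p (#|A| ^ 2)%N (#|A| * (#|A| + 1) %/ 2)%N
    [set a1 + nu * a2 | a1 in A, a2 in A].
Proof. move=> hp hA hnu; exact: (main_in p A nu hp hA hnu). Qed.
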